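(* Let $D' \in \mathrm{Sym}_n(\mathbb{R}_{\geq 0})$ and let $D^A$ be the all pairs shortest path matrix of the complete weighted graph $K_n(D')$. Then for every entrywise $\ell_p$ norm, $D^A$ is a solution of \[\operatorname{argmin}\{\|D-D'\|_p : D \text{ metric},\ D \preceq D'\}.\] In particular (taking $p=1$), $D^A$ is the minimal $\ell_1$ norm decrease only metric repair. *)

(* Defs.v *)
From HB Require Import structures.
From mathcomp Require Import all_boot all_order all_algebra.
From mathcomp Require Import boolp classical_sets reals constructive_ereal ereal exp.
Set Implicit Arguments. Unset Strict Implicit. Unset Printing Implicit Defensive.
Import Order.TTheory GRing.Theory Num.Theory.
Local Open Scope ring_scope.
Local Open Scope classical_set_scope.

Section Defs.
Variables (R : realType) (n : nat).

Definition sym_nonneg (M : 'M[R]_n) : Prop :=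
  (forall i j, M i j = M j i) /\ (forall i j, 0 <= M i j).

Definition is_metric (D : 'M[R]_n) : Prop :=
  [/\ forall i j, D i j = D j i,
      forall i j, 0 <= D i j,
      forall i, D i i = 0 &
      forall i j k, D i k <= D i j + D j k].

Definition mx_le (D D' : 'M[R]_n) : Prop := forall i j, D i j <= D' i j.

(* weight of the walk x -> s_0 -> s_1 -> ... in the complete graph K_n(W) *)
Fixpoint walk_cost (W : 'M[R]_n) (x : 'I_n) (s : seq 'I_n) : R :=
  match s with
  | [::] => 0
  | y :: s' => W x y + walk_cost W y s'
  end.

(* all pairs shortest path matrix of the complete weighted graph K_n(W):
   (i,j) entry = infimum (in fact minimum) of the weights of walks from i to j *)
Definition apsp (W : 'M[R]_n) : 'M[R]_n :=
  \matrix_(i < n, j < n) inf [set walk_cost W i s | s in [set s | last i s = j]].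

Definition entry_lpnorm (p : \bar R) (M : 'M[R]_n) : R :=
  match p with
  | EFin r => (\sum_(i < n) \sum_(j < n) `|M i j| `^ r) `^ r^-1
  | +oo%E => \big[Num.max/0]_(i < n) \big[Num.max/0]_(j < n) `|M i j|
  | -oo%E => 0
  end.

End Defs.

(* Main.v *)
Require Import Defs.
From HB Require Import structures.
From mathcomp Require Import all_boot all_order all_algebra.
From mathcomp Require Import boolp classical_sets reals constructive_ereal ereal exp.
Import Order.TTheory GRing.Theory Num.Theory.
Local Open Scope ring_scope.

Section Helpers.
Variables (R : realType) (n : nat).
Local Open Scope classical_set_scope.

Definition WS (W : 'M[R]_n) i j :=
  [set walk_cost W i s | s in [set s | last i s = j]].

Lemma walk_cost_ge0 (W : 'M[R]_n) : (forall i j, 0 <= W i j) ->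
  forall x s, 0 <= walk_cost W x s.
Proof. move=> W0 x s; elim: s x => [|y s IH] x //=; exact: addr_ge0. Qed.

Lemma walk_cost_cat (W : 'M[R]_n) x s t :
  walk_cost W x (s ++ t) = walk_cost W x s + walk_cost W (last x s) t.
Proof. by elim: s x => [|y s IH] x /=; rewrite ?add0r // IH addrA. Qed.

Lemma walk_cost_rcons (W : 'M[R]_n) x s y :
  walk_cost W x (rcons s y) = walk_cost W x s + W (last x s) y.
Proof. by rewrite -cats1 walk_cost_cat /= addr0. Qed.

Lemma walk_cost_rev (W : 'M[R]_n) : (forall i j, W i j = W j i) ->
  forall x s, walk_cost W (last x s) (rev (belast x s)) = walk_cost W x s.
Proof.
move=> Ws x s; elim: s x => [|y s IH] x //=.
rewrite rev_cons walk_cost_rcons IH addrC; congr (_ + _).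
case: s {IH} => [|z s] /=; first by rewrite Ws.
by rewrite rev_cons last_rcons Ws.
Qed.

Lemma WS_ne (W : 'M[R]_n) i j : WS W i j !=set0.
Proof. by exists (walk_cost W i [:: j]); exists [:: j]. Qed.

Lemma WS_lb (W : 'M[R]_n) i j : (forall i j, 0 <= W i j) ->
  has_lbound (WS W i j).
Proof. by move=> W0; exists 0 => _ [s _ <-]; exact: walk_cost_ge0. Qed.

Lemma apspE (W : 'M[R]_n) i j : apsp W i j = inf (WS W i j).
Proof. by rewrite /apsp mxE. Qed.

Lemma apsp_le (W : 'M[R]_n) i j s : (forall i j, 0 <= W i j) ->
  last i s = j -> apsp W i j <= walk_cost W i s.
Proof.
move=> W0 hs; rewrite apspE; apply: (ge_inf (WS_lb W i j W0)).
by exists s.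
Qed.

Lemma apsp_ge (W : 'M[R]_n) i j x :
  (forall s, last i s = j -> x <= walk_cost W i s) -> x <= apsp W i j.
Proof.
move=> h; rewrite apspE; apply: lb_le_inf; first exact: WS_ne.
by move=> _ [s hs <-]; exact: h.
Qed.

Lemma bigmax_mono (I : finType) (F G : I -> R) :
  (forall i, F i <= G i) ->
  \big[Num.max/0]_(i : I) F i <= \big[Num.max/0]_(i : I) G i.
Proof.
move=> FG; elim/big_ind2: _ => //; move=> a b c d h1 h2; rewrite ge_max; apply/andP; split.
- by rewrite le_max h1.
- by rewrite le_max h2 orbT.
Qed.

End Helpers.

Theorem mainTheorem2 (R : realType) (n : nat) (D' : 'M[R]_n)
    (hD' : sym_nonneg D') (p : \bar R) (hp : (1 <= p)%E) :
  [/\ is_metric (apsp D'),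
      mx_le (apsp D') D' &
      forall D : 'M[R]_n, is_metric D -> mx_le D D' ->
        entry_lpnorm p (apsp D' - D') <= entry_lpnorm p (D - D')].
Proof.
case: hD' => Ds D0.
have ge0 : forall i j, 0 <= apsp D' i j.
  by move=> i j; apply: apsp_ge => s _; exact: walk_cost_ge0.
have leD : mx_le (apsp D') D'.
  move=> i j; have := @apsp_le R n D' i j [:: j] D0 (erefl _).
  by rewrite /= addr0.
have below : forall D : 'M[R]_n, is_metric D -> mx_le D D' ->
    forall i j, D i j <= apsp D' i j.
  move=> D [_ _ Dd Dt] DD i j; apply: apsp_ge => s.
  elim: s i => [|y s IH] i /=; first by move=> ->; rewrite Dd.
  move=> /IH h; apply: (le_trans (Dt i y j)); exact: lerD.
split => //.
- split => //.
  + move=> i j; apply/le_anti/andP; split.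
    * apply: apsp_ge => s hs.
      have := @walk_cost_rev R n D' Ds j s; rewrite hs => <-.
      apply: apsp_le => //.
      case: s hs => [|z s] /=; first by move=> ->.
      by move=> _; rewrite rev_cons last_rcons.
    * apply: apsp_ge => s hs.
      have := @walk_cost_rev R n D' Ds i s; rewrite hs => <-.
      apply: apsp_le => //.
      case: s hs => [|z s] /=; first by move=> ->.
      by move=> _; rewrite rev_cons last_rcons.
  + move=> i; apply/le_anti/andP; split; last exact: ge0.
    by have := @apsp_le R n D' i i [::] D0 (erefl i).
  + move=> i j k.
    rewrite -lerBlDr; apply: apsp_ge => t ht.
    rewrite lerBlDr addrC -lerBlDr; apply: apsp_ge => s hs.
    rewrite lerBlDr addrC -ht -walk_cost_cat.
    by apply: apsp_le => //; rewrite last_cat ht hs.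
- move=> D hD hDD.
  have habs : forall i j, `|(apsp D' - D') i j| <= `|(D - D') i j|.
    move=> i j; have h1 := leD i j; have h2 := hDD i j.
    have e := @apspE R n D' i j; rewrite /WS in e.
    rewrite !mxE -e !ler0_norm ?subr_le0 //.
    by rewrite lerN2 lerD2r; exact: below.
  case: p hp => [r hr| _ | _]; last exact: lexx.
  + rewrite /entry_lpnorm.
    have r0 : 0 < r by rewrite (lt_le_trans ltr01) // -lee_fin.
    have r0' : 0 <= r by exact: ltW.
    have ri : 0 <= r^-1 by rewrite invr_ge0.
    apply: (ge0_ler_powR ri).
    - by rewrite nnegrE; apply: sumr_ge0 => i _; apply: sumr_ge0 => j _; exact: powR_ge0.
    - by rewrite nnegrE; apply: sumr_ge0 => i _; apply: sumr_ge0 => j _; exact: powR_ge0.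
    apply: ler_sum => i _; apply: ler_sum => j _.
    apply: (ge0_ler_powR r0').
    - rewrite nnegrE; exact: normr_ge0.
    - rewrite nnegrE; exact: normr_ge0.
    exact: habs.
  + rewrite /entry_lpnorm.
    apply: bigmax_mono => i; apply: bigmax_mono => j; exact: habs.
Qed.
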